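(* Let $T$ be a ring which is integral over its center $C(T)$ and satisfies $J(T)=0$. Then either $T$ has a maximal subring or $T$ is a commutative ring.
   Context: All rings are associative with identity $1\neq 0$, and subrings contain the identity of the ambient ring. A maximal subring of a ring $T$ is a proper subring $S\subsetneq T$ such that there is no subring strictly between $S$ and $T$. $C(T)$ denotes the center of $T$. $T$ is integral over its center if every $t\in T$ is a root of a monic polynomial of degree $\geq 1$ with coefficients in $C(T)$. $J(T)$ is the Jacobson radical of $T$. *)

(* Defs.v *)
From HB Require Import structures.
From mathcomp Require Import all_boot all_order all_algebra.
Set Implicit Arguments. Unset Strict Implicit. Unset Printing Implicit Defensive.
Import GRing.Theory.
Local Open Scope ring_scope.

(* Rings: associative with identity 1 <> 0, i.e. MathComp nzRingType.
   Subsets are Prop-valued predicates T -> Prop (no decidability assumed). *)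

Definition is_subring (T : nzRingType) (S : T -> Prop) : Prop :=
  [/\ S 1, (forall x y, S x -> S y -> S (x - y)) & (forall x y, S x -> S y -> S (x * y))].

Definition is_maximal_subring (T : nzRingType) (S : T -> Prop) : Prop :=
  [/\ is_subring S, (exists t, ~ S t) &
      (forall S' : T -> Prop, is_subring S' -> (forall x, S x -> S' x) ->
         (forall x, S' x -> S x) \/ (forall x, S' x))].

Definition center (T : nzRingType) (c : T) : Prop := forall t : T, c * t = t * c.

Definition integral_over_center (T : nzRingType) : Prop :=
  forall t : T, exists p : {poly T},
    [/\ p \is monic, (1 < size p)%N, (forall i, center p`_i) & p.[t] = 0].

Definition is_left_ideal (T : nzRingType) (I : T -> Prop) : Prop :=
  [/\ I 0, (forall x y, I x -> I y -> I (x - y)) & (forall r x, I x -> I (r * x))].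

Definition is_maximal_left_ideal (T : nzRingType) (M : T -> Prop) : Prop :=
  [/\ is_left_ideal M, (exists t, ~ M t) &
      (forall I : T -> Prop, is_left_ideal I -> (forall x, M x -> I x) ->
         (forall x, I x -> M x) \/ (forall x, I x))].

Definition jacobson (T : nzRingType) (x : T) : Prop :=
  forall M : T -> Prop, is_maximal_left_ideal M -> M x.

Definition is_commutative_ring (T : nzRingType) : Prop :=
  forall x y : T, x * y = y * x.

(* Main.v *)
Require Import Defs.
From mathcomp Require Import all_boot all_order all_algebra.
From mathcomp Require Import boolp classical_sets.
From mathcomp Require Import zify.
Set Implicit Arguments. Unset Strict Implicit. Unset Printing Implicit Defensive.
Import GRing.Theory.
Local Open Scope ring_scope.

Lemma zorn_pred (U : Type) (P : (U -> Prop) -> Prop) :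
  (forall F : (U -> Prop) -> Prop, (forall X, F X -> P X) ->
     (forall X Y, F X -> F Y -> (forall u, X u -> Y u) \/ (forall u, Y u -> X u)) ->
     P (fun u => exists2 X, F X & X u)) ->
  exists A, P A /\ forall B, (forall u, A u -> B u) -> P B -> forall u, B u -> A u.
Proof.
move=> H.
have [A [PA Amax]] := @Zorn_bigcup U P (fun F FP Ft => H F FP Ft).
exists A; split => // B AB PB.
by apply: contrapT => nBA; apply: (Amax B) => //.
Qed.

Lemma finite_gen_max (T : nzRingType) (S0 : T -> Prop) (gs : seq T) :
  is_subring S0 -> (exists t, ~ S0 t) ->
  (forall S, is_subring S -> (forall x, S0 x -> S x) ->
     (forall y, y \in gs -> S y) -> forall t, S t) ->
  exists S : T -> Prop, is_maximal_subring S.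
Proof.
move=> sS0 [t0 nt0] Hgen.
pose good (S : T -> Prop) :=
  [/\ is_subring S, (forall x, S0 x -> S x) & ~ (forall y, y \in gs -> S y)].
pose P (S : T -> Prop) := (forall x, ~ S x) \/ good S.
have gS0 : good S0.
  split => // allg; apply: nt0; exact: (Hgen S0).
have [A [PA Amax]] : exists A, P A /\ forall B, (forall u, A u -> B u) -> P B ->
    forall u, B u -> A u.
  apply: zorn_pred => F FP Ftot.
  have [[X0 [FX0 gX0]]|nog] := pselect (exists X, F X /\ good X); last first.
    left => x [X FX Xx].
    case: (FP X FX) => [/(_ x)//|gX]; apply: nog; by exists X.
  have memg : forall u, (exists2 X, F X & X u) -> exists X, [/\ F X, good X & X u].
    move=> u [X FX Xu]; case: (FP X FX) => [/(_ u)//|gX]; by exists X.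
  right; split.
  - case: gX0 => [[s1 sB sM] _ _]; split.
    + by exists X0.
    + move=> x y /memg [X [FX gX Xx]] /memg [Y [FY gY Yy]].
      case: gX => [[_ XB _] _ _]; case: gY => [[_ YB _] _ _].
      case: (Ftot X Y FX FY) => XY.
      * by exists Y => //; apply: YB => //; apply: XY.
      * by exists X => //; apply: XB => //; apply: XY.
    + move=> x y /memg [X [FX gX Xx]] /memg [Y [FY gY Yy]].
      case: gX => [[_ _ XM] _ _]; case: gY => [[_ _ YM] _ _].
      case: (Ftot X Y FX FY) => XY.
      * by exists Y => //; apply: YM => //; apply: XY.
      * by exists X => //; apply: XM => //; apply: XY.
  - by move=> x S0x; exists X0 => //; case: gX0 => _ H0 _; exact: H0.
  - move=> allg.
    have key : forall l : seq T, (forall y, y \in l -> exists2 X, F X & X y) ->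
        exists X, [/\ F X, good X & forall y, y \in l -> X y].
      elim => [|g gs' IH] allg'.
        by exists X0; split.
      have [X [FX gX Xall]] : exists X, [/\ F X, good X & forall y, y \in gs' -> X y].
        by apply: IH => y yin; apply: allg'; rewrite inE yin orbT.
      have /memg [Y [FY gY Yg]] := allg' g (mem_head _ _).
      case: (Ftot X Y FX FY) => XY.
      * exists Y; split => // y; rewrite inE => /orP [/eqP -> //|/Xall]; exact: XY.
      * exists X; split => // y; rewrite inE => /orP [/eqP -> |/Xall //]; exact: XY.
    have [X [FX [sX S0X nall] Xall]] := key gs allg; exact: nall.
have gA : good A.
  case: PA => // emp; exfalso.
  have A1 := Amax S0 (fun (u : T) (Au : A u) => False_ind (S0 u) (emp u Au)) (or_intror gS0) 1.
  case: gS0 => [[s1 _ _] _ _]; exact: (emp 1 (A1 s1)).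
case: gA => sA S0A nall; exists A; split; first exact: sA.
  apply: contrapT => nex; apply: nall => y _.
  by apply: contrapT => nAy; apply: nex; exists y.
move=> S' sS' AS'.
have [allS'|nallS'] := pselect (forall x, S' x); first by right.
left; apply: Amax => //; right; split => //.
- by move=> x /S0A /AS'.
- move=> allg; apply: nallS'; apply: Hgen => // x /S0A /AS'; done.
Qed.

Section Helpers.
End Helpers.

Lemma li0 (T : nzRingType) (M : T -> Prop) : is_left_ideal M -> M 0.
Proof. by case. Qed.
Lemma liN (T : nzRingType) (M : T -> Prop) x : is_left_ideal M -> M x -> M (- x).
Proof. by case=> M0 MB _ Mx; rewrite -sub0r; apply: MB. Qed.
Lemma liD (T : nzRingType) (M : T -> Prop) x y : is_left_ideal M -> M x -> M y -> M (x + y).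
Proof.
move=> HM Mx My; case: (HM) => M0 MB _.
by rewrite -[y]opprK; apply: MB => //; apply: liN.
Qed.
Lemma liB (T : nzRingType) (M : T -> Prop) x y : is_left_ideal M -> M x -> M y -> M (x - y).
Proof. by case=> _ MB _; apply: MB. Qed.
Lemma liM (T : nzRingType) (M : T -> Prop) r x : is_left_ideal M -> M x -> M (r * x).
Proof. by case=> _ _ MM; apply: MM. Qed.
Lemma li_sum (T : nzRingType) (M : T -> Prop) (I : Type) (r : seq I) (P : pred I) (F : I -> T) :
  is_left_ideal M -> (forall i, P i -> M (F i)) -> M (\sum_(i <- r | P i) F i).
Proof.
move=> HM HF; apply: (@big_ind T M) => //; first exact: li0.
by move=> x y; apply: liD.
Qed.

Lemma lin_dep (T : nzRingType) (M : T -> Prop) :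
  is_left_ideal M -> (forall c, ~ M c -> exists w, M (w * c - 1)) -> ~ M 1 ->
  forall n m, (n < m)%N -> forall v : 'I_m -> nat -> T,
  exists d : 'I_m -> T, (exists i, ~ M (d i)) /\
    forall j, (j < n)%N -> M (\sum_i d i * v i j).
Proof.
move=> HM Minv M1; elim => [|n IH] m ltnm v.
  exists (fun _ => 1); split => //.
  by exists (Ordinal ltnm).
case: m ltnm v => [//|m'] ltnm v.
have [[i0 ni0]|none] := pselect (exists i0, ~ M (v i0 0%N)); last first.
  have ltnm2 : (n < m'.+1)%N by apply: ltn_trans ltnm.
  have [d [nz Hd]] := IH _ ltnm2 (fun i j => v i j.+1).
  exists d; split => // [[|j]] ltj; last exact: Hd.
  apply: li_sum => // i _; apply: liM => //.
  by apply: contrapT => nv; apply: none; exists i.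
have [w Hw] := Minv _ ni0.
pose u (k : 'I_m') j := v (lift i0 k) j.+1 - v (lift i0 k) 0%N * w * v i0 j.+1.
have [e [[k0 nk0] He]] := IH _ ltnm u.
pose s := \sum_k e k * v (lift i0 k) 0%N.
pose d (i : 'I_m'.+1) := if unlift i0 i is Some k then e k else - (s * w).
have dlift k : d (lift i0 k) = e k by rewrite /d liftK.
have di0 : d i0 = - (s * w) by rewrite /d unlift_none.
have split_sum j : \sum_i d i * v i j = d i0 * v i0 j + \sum_(k < m') d (lift i0 k) * v (lift i0 k) j.
  by rewrite (bigD1_ord i0) //.
exists d; split.
  by exists (lift i0 k0); rewrite dlift.
move=> [|j] ltj; rewrite split_sum di0.
  under eq_bigr do rewrite dlift.
  have -> : - (s * w) * v i0 0%N + s = - (s * (w * v i0 0%N - 1)).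
    by rewrite mulrBr mulr1 opprB mulNr mulrA addrC.
  by apply: liN => //; apply: liM.
under eq_bigr do rewrite dlift.
have -> : - (s * w) * v i0 j.+1 + \sum_(k < m') e k * v (lift i0 k) j.+1 =
          \sum_(k < m') e k * u k j.
  rewrite /u /s; under [X in _ = X]eq_bigr do rewrite mulrBr.
  rewrite sumrB addrC; congr (_ + _).
  rewrite mulNr; congr (- _).
  rewrite mulr_suml mulr_suml; apply: eq_bigr => k _.
  by rewrite !mulrA.
exact: He.
Qed.

Lemma dep_K (T : nzRingType) (M : T -> Prop) (a : T) (p : {poly T}) :
  is_left_ideal M -> (forall x t, M x -> M (x * t)) ->
  (forall c, ~ M c -> exists w, M (w * c - 1)) -> ~ M 1 ->
  p \is monic -> (forall i, center p`_i) -> p.[a] = 0 ->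
  forall m (x : 'I_m -> T), ((size p).-1 < m)%N ->
  exists k : 'I_m -> T, [/\ (forall i, M (k i * a - a * k i)),
     (exists i, ~ M (k i)) & M (\sum_i k i * x i)].
Proof.
move=> HM M2 Minv M1 pmon pc pa m x ltm.
set n := (size p).-1 in ltm.
pose V (d : 'I_m -> T) j := \sum_i d i * (a ^+ j * x i).
have an : a ^+ n = - \sum_(l < n) p`_l * a ^+ l.
  have sp : size p = n.+1 by rewrite /n prednK // lt0n size_poly_eq0 monic_neq0.
  move: pa; rewrite horner_coef sp big_ord_recr /=.
  have -> : p`_n = 1 by move/monicP: pmon; rewrite lead_coefE.
  by rewrite mul1r => /eqP; rewrite addrC addr_eq0 => /eqP.
have rec d (j : nat) : V d (j + n)%N = - \sum_(l < n) p`_l * V d (j + l)%N.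
  rewrite /V; under eq_bigr => i _ do rewrite exprD an mulrN mulNr mulrN mulr_sumr mulr_suml mulr_sumr.
  rewrite sumrN exchange_big /=; congr (- _); apply: eq_bigr => l _.
  rewrite mulr_sumr; apply: eq_bigr => i _.
  rewrite exprD !mulrA; congr (_ * _); congr (_ * _).
  rewrite -(mulrA (d i)) -(pc l (a ^+ j)) mulrA -(pc l (d i)) //.
have solall d : (forall j, (j < n)%N -> M (V d j)) -> forall j, M (V d j).
  move=> Hd; elim/ltn_ind => j IHj.
  case: (ltnP j n) => [|gejn]; first exact: Hd.
  rewrite -(subnK gejn) rec; apply: liN => //; apply: li_sum => // l _.
  apply: liM => //; apply: IHj; have := ltn_ord l; lia.
have [d0 [nz0 Hd0]] := @lin_dep _ _ HM Minv M1 _ _ ltm (fun i j => a ^+ j * x i).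
have key : forall N d, (#|[set i | ~~ `[< M (d i) >]]| <= N)%N ->
    (forall j, M (V d j)) -> (exists i, ~ M (d i)) ->
    exists k, [/\ forall j, M (V k j), exists i, ~ M (k i)
                & forall i, M (k i * a - a * k i)].
  elim => [|N IHN] d hN sold [i0 ni0].
    exfalso; move: hN; rewrite leqn0 cards_eq0 => /eqP S0.
    have : i0 \in [set i | ~~ `[< M (d i) >]] by rewrite inE; apply/asboolPn.
    by rewrite S0 inE.
  have [w Hw] := Minv _ ni0.
  pose d' i := w * d i.
  have sold' j : M (V d' j).
    have -> : V d' j = w * V d j.
      by rewrite /V mulr_sumr; apply: eq_bigr => i _; rewrite /d' -mulrA.
    exact: liM.
  pose d'' i := a * d' i - d' i * a.
  have sold'' j : M (V d'' j).
    have -> : V d'' j = a * V d' j - V d' j.+1.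
      rewrite /V mulr_sumr -sumrB; apply: eq_bigr => i _.
      by rewrite mulrBl exprS !mulrA.
    by apply: liB => //; apply: liM.
  have nzd' : ~ M (d' i0).
    move=> Md; apply: M1; have -> : 1 = d' i0 - (w * d i0 - 1) by rewrite opprB addrC subrK.
    exact: liB.
  have [allM|nall] := pselect (forall i, M (d'' i)).
    exists d'; split => //; first by exists i0.
    move=> i; have -> : d' i * a - a * d' i = - d'' i by rewrite /d'' opprB.
    exact: liN.
  have nzd'' : exists i, ~ M (d'' i).
    by apply: contrapT => nex; apply: nall => i; apply: contrapT => ni; apply: nex; exists i.
  apply: (IHN d'') => //.
  set A := [set i | ~~ `[< M (d i) >]] in hN *.
  have sub : [set i | ~~ `[< M (d'' i) >]] \subset A :\ i0.
    apply/fintype.subsetP => i; rewrite !inE => /asboolPn nMi.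
    apply/andP; split.
      apply/eqP => ei; apply: nMi; rewrite ei /d'' /d'.
      have -> : a * (w * d i0) - w * d i0 * a = a * (w * d i0 - 1) - (w * d i0 - 1) * a.
        by rewrite mulrBr mulrBl mulr1 mul1r opprB addrA subrK.
      by apply: liB => //; [apply: liM | apply: M2].
    apply/asboolPn => Mdi; apply: nMi; rewrite /d'' /d'.
    have Mdi' : M (w * d i) by apply: liM.
    by apply: liB => //; [apply: liM | apply: M2].
  have i0A : i0 \in A by rewrite inE; apply/asboolPn.
  have := subset_leq_card sub; rewrite (cardsD1 i0 A) i0A in hN.
  move=> h; apply: leq_trans h _; by [].
have [k [solk nzk Kk]] := key _ d0 (leqnn _) (solall _ Hd0) nz0.
exists k; split => //.
have := solk 0%N; rewrite /V; under eq_bigr do rewrite expr0 mul1r; by [].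
Qed.

Lemma sub4 (T : nzRingType) (x y z w : T) : (x - y) - (z - w) = (x - z) - (y - w).
Proof. rewrite !opprB !addrA (addrAC x (-y) w) (addrAC x (-z) w). exact: addrAC. Qed.

Lemma telesc (T : nzRingType) (x y z : T) : (x - y) + (y - z) = x - z.
Proof. by rewrite addrA subrK. Qed.

Lemma inv_K (T : nzRingType) (M : T -> Prop) (a c w : T) :
  is_left_ideal M -> (forall x t, M x -> M (x * t)) ->
  (forall c, ~ M c -> exists w, M (w * c - 1)) -> ~ M 1 ->
  M (c * a - a * c) -> M (w * c - 1) -> M (w * a - a * w).
Proof.
move=> HM M2 Minv M1 Kc Hw.
have nw : ~ M w.
  move=> Mw; apply: M1; have -> : 1 = w * c - (w * c - 1) by rewrite opprB addrC subrK.
  by apply: liB => //; apply: M2.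
have [w' Hw'] := Minv _ nw.
have cw' : M (c - w').
  have -> : c - w' = - ((w' * w - 1) * c) + w' * (w * c - 1).
    rewrite mulrBl mulrBr mul1r mulr1 opprB !mulrA.
    by rewrite telesc.
  by apply: liD => //; [apply: liN => //; apply: M2 | apply: liM].
have cw : M (c * w - 1).
  have -> : c * w - 1 = (c - w') * w + (w' * w - 1).
    by rewrite mulrBl addrA subrK.
  by apply: liD => //; apply: M2.
have -> : w * a - a * w = - (w * a * (c * w - 1)) + (- (w * (c * a - a * c) * w)
                           + (w * c - 1) * a * w).
  rewrite !mulrBr !mulrBl !mulr1 !mul1r !opprB !mulrA.
  by rewrite addrA telesc telesc.
apply: liD => //; first by apply: liN => //; apply: liM.
apply: liD => //; last by apply: (M2); apply: (M2).
by apply: liN => //; apply: M2; apply: liM.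
Qed.

Lemma span_K (T : nzRingType) (M : T -> Prop) (a : T) (p : {poly T}) :
  is_left_ideal M -> (forall x t, M x -> M (x * t)) ->
  (forall c, ~ M c -> exists w, M (w * c - 1)) -> ~ M 1 ->
  p \is monic -> (forall i, center p`_i) -> p.[a] = 0 ->
  exists m (x : 'I_m -> T), forall z, exists k : 'I_m -> T,
    (forall i, M (k i * a - a * k i)) /\ M (z - \sum_i k i * x i).
Proof.
move=> HM M2 Minv M1 pmon pc pa.
pose K y := M (y * a - a * y).
pose indep m (x : 'I_m -> T) := forall k : 'I_m -> T, (forall i, K (k i)) ->
   M (\sum_i k i * x i) -> forall i, M (k i).
pose P m := exists x : 'I_m -> T, indep m x.
have bnd m : P m -> (m <= (size p).-1)%N.
  move=> [x ix]; rewrite leqNgt; apply/negP => lt.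
  have [k [Kk [i nki] Mk]] := dep_K HM M2 Minv M1 pmon pc pa x lt.
  by apply: nki; apply: ix.
have [m [Pm nPm1]] : exists m, P m /\ ~ P m.+1.
  apply: contrapT => H.
  have allP : forall m, P m.
    elim => [|m IHm].
      by exists (fun _ => 0) => k _ _ [].
    by apply: contrapT => nP; apply: H; exists m.
  by have := bnd _ (allP (size p).-1.+1); rewrite ltnn.
case: Pm => x indx.
exists m, x => z.
pose y (i : 'I_m.+1) := if unlift ord0 i is Some i' then x i' else z.
have [k [Kk Mk [i nki]]] : exists k : 'I_m.+1 -> T, [/\ forall i, K (k i),
    M (\sum_i k i * y i) & exists i, ~ M (k i)].
  apply: contrapT => H; apply: nPm1; exists y => k Kk Mk i.
  by apply: contrapT => nki; apply: H; exists k; split => //; exists i.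
have split_sum : \sum_i k i * y i = k ord0 * z + \sum_(i' < m) k (lift ord0 i') * x i'.
  rewrite (bigD1_ord ord0) //=; congr (_ * _ + _).
    by rewrite /y unlift_none.
  by apply: eq_bigr => i' _; rewrite /y liftK.
rewrite split_sum in Mk.
have [Mk0|nMk0] := pselect (M (k ord0)).
  exfalso; apply: nki.
  have Mrest : M (\sum_(i' < m) k (lift ord0 i') * x i').
    have -> : \sum_(i' < m) k (lift ord0 i') * x i' =
      k ord0 * z + \sum_(i' < m) k (lift ord0 i') * x i' - k ord0 * z.
      by rewrite addrC addKr.
    by apply: liB => //; apply: (M2).
  have := indx (fun i' => k (lift ord0 i')) (fun i' => Kk _) Mrest.
  by case: (unliftP ord0 i) => [i'|] -> //; apply.
have [w Hw] := Minv _ nMk0.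
have Kw : K w by apply: (inv_K HM M2 Minv M1 (Kk ord0) Hw).
exists (fun i' => - (w * k (lift ord0 i'))); split.
  move=> i'; have -> : - (w * k (lift ord0 i')) * a - a * - (w * k (lift ord0 i')) =
     - (w * (k (lift ord0 i') * a - a * k (lift ord0 i')) + (w * a - a * w) * k (lift ord0 i')).
    rewrite mulrBr mulrBl !mulrA mulNr mulrN opprK opprD opprB.
    by rewrite opprB [in RHS]addrC telesc addrC !mulrA.
  apply: liN => //; apply: liD => //; first by apply: liM => //; exact: (Kk (lift ord0 i')).
  by apply: (M2).
have -> : z - \sum_i' - (w * k (lift ord0 i')) * x i' =
   - ((w * k ord0 - 1) * z) + w * (k ord0 * z + \sum_(i' < m) k (lift ord0 i') * x i').
  rewrite mulrDr mulrBl mul1r opprB mulrA addrA subrK.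
  under eq_bigr do rewrite mulNr; rewrite sumrN opprK mulr_sumr.
  by congr (_ + _); apply: eq_bigr => i' _; rewrite mulrA.
apply: liD => //; last exact: liM.
by apply: liN => //; apply: (M2).
Qed.

Lemma sr0 (T : nzRingType) (S : T -> Prop) : is_subring S -> S 0.
Proof. by case=> S1 SB _; rewrite -(subrr 1); apply: SB. Qed.
Lemma srN (T : nzRingType) (S : T -> Prop) x : is_subring S -> S x -> S (- x).
Proof. by move=> HS Sx; rewrite -sub0r; case: (HS) => _ SB _; apply: SB => //; apply: sr0. Qed.
Lemma srD (T : nzRingType) (S : T -> Prop) x y : is_subring S -> S x -> S y -> S (x + y).
Proof.
move=> HS Sx Sy; rewrite -[y]opprK; case: (HS) => _ SB _; apply: SB => //; exact: srN.
Qed.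
Lemma srM (T : nzRingType) (S : T -> Prop) x y : is_subring S -> S x -> S y -> S (x * y).
Proof. by case=> _ _ SM; apply: SM. Qed.
Lemma sr_sum (T : nzRingType) (S : T -> Prop) (I : Type) (r : seq I) (P : pred I) (F : I -> T) :
  is_subring S -> (forall i, P i -> S (F i)) -> S (\sum_(i <- r | P i) F i).
Proof.
move=> HS HF; apply: (@big_ind T S) => //; first exact: sr0.
by move=> x y; apply: srD.
Qed.

Lemma maxli_gen (T : nzRingType) (M : T -> Prop) (c : T) :
  is_maximal_left_ideal M -> ~ M c -> exists u r, M u /\ 1 = u + r * c.
Proof.
case=> HM _ Mmax nc.
pose N v := exists u r, M u /\ v = u + r * c.
have HN : is_left_ideal N.
  split.
  - by exists 0, 0; split; [exact: li0 | rewrite mul0r addr0].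
  - move=> x y [u1 [r1 [M1 ->]]] [u2 [r2 [M2 ->]]].
    exists (u1 - u2), (r1 - r2); split; first exact: liB.
    by rewrite mulrBl opprD addrACA.
  - move=> r x [u [s [Mu ->]]]; exists (r * u), (r * s); split; first exact: liM.
    by rewrite mulrDr mulrA.
have MN : forall x, M x -> N x by move=> x Mx; exists x, 0; rewrite mul0r addr0.
case: (Mmax N HN MN) => [NM|allN].
  by exfalso; apply: nc; apply: NM; exists 0, 1; split; [exact: li0 | rewrite mul1r add0r].
exact: allN.
Qed.

Lemma case1 (T : nzRingType) (M : T -> Prop) (m t : T) :
  is_maximal_left_ideal M -> M m -> ~ M (m * t) ->
  exists S : T -> Prop, is_maximal_subring S.
Proof.
move=> Mmax Mm nmt; have HM := Mmax; case: HM => HM _ _.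
have [u [r [Mu e1]]] := maxli_gen Mmax nmt.
pose S0 (x : T) := forall v, M v -> M (v * x).
have MS0 x : M x -> S0 x by move=> Mx v Mv; apply: liM.
apply: (@finite_gen_max T S0 [:: t]).
- split.
  + by move=> v; rewrite mulr1.
  + move=> x y Sx Sy v Mv; rewrite mulrBr; apply: liB => //; [exact: Sx | exact: Sy].
  + by move=> x y Sx Sy v Mv; rewrite mulrA; apply: Sy; apply: Sx.
- by exists t => /(_ m Mm).
- move=> S HS S0S allg z.
  have -> : z = z * u + (z * r * m) * t by rewrite -!mulrA -mulrDr -e1 mulr1.
  apply: srD => //; first by apply: S0S; apply: MS0; apply: liM.
  apply: srM => //; last by apply: allg; rewrite mem_head.
  by apply: S0S; apply: MS0; apply: liM.
Qed.

Lemma case2 (T : nzRingType) (M : T -> Prop) (a b : T) (p : {poly T}) :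
  is_maximal_left_ideal M -> (forall x t, M x -> M (x * t)) ->
  ~ M (a * b - b * a) ->
  p \is monic -> (forall i, center p`_i) -> p.[a] = 0 ->
  exists S : T -> Prop, is_maximal_subring S.
Proof.
move=> Mmax M2 nab pmon pc pa; have HM := Mmax; case: HM => HM [t0 nt0] _.
have M1 : ~ M 1 by move=> M1; apply: nt0; rewrite -(mul1r t0); apply: M2.
have Minv c : ~ M c -> exists w, M (w * c - 1).
  move=> nc; have [u [r [Mu e1]]] := maxli_gen Mmax nc.
  exists r; have -> : r * c - 1 = - u by rewrite e1 opprD addrCA subrr addr0.
  exact: liN.
have [m [x Hx]] := span_K HM M2 Minv M1 pmon pc pa.
pose K y := M (y * a - a * y).
have MK y : M y -> K y by move=> My; apply: liB => //; [apply: (M2) | apply: liM].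
apply: (@finite_gen_max T K (codom x)).
- split.
  + by rewrite /K mul1r mulr1 subrr; exact: li0.
  + move=> y1 y2 K1 K2; rewrite /K.
    have -> : (y1 - y2) * a - a * (y1 - y2) = (y1 * a - a * y1) - (y2 * a - a * y2).
      by rewrite mulrBl mulrBr sub4.
    exact: liB.
  + move=> y1 y2 K1 K2; rewrite /K.
    have -> : y1 * y2 * a - a * (y1 * y2) = y1 * (y2 * a - a * y2) + (y1 * a - a * y1) * y2.
      by rewrite mulrBr mulrBl !mulrA telesc.
    by apply: liD => //; [apply: liM | apply: (M2)].
- exists b => Kb; apply: nab; rewrite -opprB; exact: liN.
- move=> S HS KS allg z.
  have [k [Kk Mk]] := Hx z.
  rewrite -(subrK (\sum_i k i * x i) z).
  apply: srD => //; first by apply: KS; apply: MK.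
  apply: sr_sum => // i _; apply: srM => //; first by apply: KS; apply: Kk.
  by apply: allg; apply: codom_f.
Qed.

Theorem theorem3p6 (T : nzRingType) :
  integral_over_center T ->
  (forall x : T, jacobson x -> x = 0) ->
  (exists S : T -> Prop, is_maximal_subring S) \/ is_commutative_ring T.
Proof.
move=> Hint HJ.
have [comm|ncomm] := pselect (is_commutative_ring T); first by right.
left.
have [a [b nab]] : exists a b : T, a * b <> b * a.
  apply: contrapT => H; apply: ncomm => a b; apply: contrapT => ne; apply: H; by exists a, b.
have [M [Mmax nMc]] : exists M : T -> Prop, is_maximal_left_ideal M /\ ~ M (a * b - b * a).
  apply: contrapT => H.
  have Jc : jacobson (a * b - b * a).
    by move=> M' Mmax'; apply: contrapT => nM; apply: H; exists M'.
  by apply: nab; apply/eqP; rewrite -subr_eq0; apply/eqP; exact: HJ.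
have [two|ntwo] := pselect (forall x t, M x -> M (x * t)).
  have [p [pmon _ pc pa]] := Hint a.
  exact: (case2 Mmax two nMc pmon pc pa).
have [m [t [Mm nmt]]] : exists m t, M m /\ ~ M (m * t).
  apply: contrapT => H; apply: ntwo => x t Mx; apply: contrapT => nxt; apply: H; by exists x, t.
exact: (case1 Mmax Mm nmt).
Qed.
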